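(* Consider the stochastic quadratic problem with symmetric positive definite $Q=(q_{ij})\in\mathbb{R}^{d\times d}$ having eigenvalues $\lambda_1,\dots,\lambda_d>0$, and fix $\theta$. For the stochastic direction $z=-\operatorname{sign}(g(\theta))$, the expected improvement with optimal step size satisfies $$\mathcal{I}_{\mathrm{SSD}}(\theta)\ge\frac12\,\frac{\Big(\sum_{i=1}^d(2\rho_i-1)\,|\nabla\mathcal{L}(\theta)_i|\Big)^2}{\sum_{i=1}^d\lambda_i}\;p_{\mathrm{diag}}(Q),$$ where $\rho_i=\mathbf{P}[\operatorname{sign}(g(\theta)_i)=\operatorname{sign}(\nabla\mathcal{L}(\theta)_i)]$ and $p_{\mathrm{diag}}(Q)=\big(\sum_{i=1}^d|q_{ii}|\big)/\big(\sum_{i,j=1}^d|q_{ij}|\big)$.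
   Context: Stochastic quadratic problem (sQP): loss $\ell(\theta;x)=\frac12(\theta-x)^TQ(\theta-x)$ with data $x\sim\mathcal{N}(x^\ast,\nu^2I)$, $\nu\ge0$; objective $\mathcal{L}(\theta)=\mathbf{E}_x[\ell(\theta;x)]$, with $\nabla\mathcal{L}(\theta)=Q(\theta-x^\ast)$; stochastic gradient $g(\theta)=Q(\theta-x)\sim\mathcal{N}(\nabla\mathcal{L}(\theta),\nu^2QQ)$. $\operatorname{sign}$ is applied element-wise with $\operatorname{sign}(0)=1$. For a random direction $z$ with $\mathbf{E}[z^TQz]>0$, the expected improvement with the optimal step size $\alpha_\ast=-\nabla\mathcal{L}(\theta)^T\mathbf{E}[z]/\mathbf{E}[z^TQz]$ is $\mathcal{I}(\theta):=|\mathbf{E}[\mathcal{L}(\theta+\alpha_\ast z)]-\mathcal{L}(\theta)|=\frac{(\nabla\mathcal{L}(\theta)^T\mathbf{E}[z])^2}{2\,\mathbf{E}[z^TQz]}$. *)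

(* Defs.v *)
From HB Require Import structures.
From mathcomp Require Import all_boot all_order all_algebra.
Set Implicit Arguments. Unset Strict Implicit. Unset Printing Implicit Defensive.
Import Order.TTheory GRing.Theory Num.Theory.
Local Open Scope ring_scope.

Definition sgn (R : realFieldType) (x : R) : R := if 0 <= x then 1 else -1.

Definition qform (R : realFieldType) (d : nat) (Q : 'M[R]_d) (v : 'cV[R]_d) : R :=
  (v^T *m Q *m v) 0 0.

(* objective L(theta) = E_x[ 1/2 (theta-x)^T Q (theta-x) ], x ~ N(xstar, nu^2 I),
   in closed form: 1/2 (theta - xstar)^T Q (theta - xstar) + nu^2/2 tr Q *)
Definition sqp_loss (R : realFieldType) (d : nat) (Q : 'M[R]_d) (xstar : 'cV[R]_d)
  (nu : R) (theta : 'cV[R]_d) : R :=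
  2^-1 * qform Q (theta - xstar) + 2^-1 * nu ^+ 2 * \tr Q.

Definition sqp_grad (R : realFieldType) (d : nat) (Q : 'M[R]_d) (xstar theta : 'cV[R]_d)
  : 'cV[R]_d := Q *m (theta - xstar).

(* A sign pattern b : {ffun 'I_d -> bool} encodes sign(g(theta)) (b i = true iff
   sign(g_i) = +1); the SSD direction is z = - sign(g). *)
Definition ssd_dir (R : realFieldType) (d : nat) (b : {ffun 'I_d -> bool}) : 'cV[R]_d :=
  \col_i (if b i then -1 else 1).

Definition sign_of_pattern (R : realFieldType) (d : nat) (b : {ffun 'I_d -> bool})
  (i : 'I_d) : R := if b i then 1 else -1.

(* P : law of the sign pattern sign(g(theta)) *)
Definition E_dir (R : realFieldType) (d : nat) (P : {ffun 'I_d -> bool} -> R) : 'cV[R]_d :=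
  \sum_b P b *: ssd_dir R b.

Definition E_qform (R : realFieldType) (d : nat) (Q : 'M[R]_d)
  (P : {ffun 'I_d -> bool} -> R) : R :=
  \sum_b P b * qform Q (ssd_dir R b).

Definition opt_step (R : realFieldType) (d : nat) (Q : 'M[R]_d) (xstar theta : 'cV[R]_d)
  (P : {ffun 'I_d -> bool} -> R) : R :=
  - (((sqp_grad Q xstar theta)^T *m E_dir P) 0 0) / E_qform Q P.

Definition E_loss (R : realFieldType) (d : nat) (Q : 'M[R]_d) (xstar : 'cV[R]_d) (nu : R)
  (theta : 'cV[R]_d) (P : {ffun 'I_d -> bool} -> R) (alpha : R) : R :=
  \sum_b P b * sqp_loss Q xstar nu (theta + alpha *: ssd_dir R b).

Definition improvement (R : realFieldType) (d : nat) (Q : 'M[R]_d) (xstar : 'cV[R]_d)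
  (nu : R) (theta : 'cV[R]_d) (P : {ffun 'I_d -> bool} -> R) : R :=
  `| E_loss Q xstar nu theta P (opt_step Q xstar theta P) - sqp_loss Q xstar nu theta |.

Definition rho (R : realFieldType) (d : nat) (Q : 'M[R]_d) (xstar theta : 'cV[R]_d)
  (P : {ffun 'I_d -> bool} -> R) (i : 'I_d) : R :=
  \sum_(b | sign_of_pattern R b i == sgn (sqp_grad Q xstar theta i 0)) P b.

Definition p_diag (R : realFieldType) (d : nat) (Q : 'M[R]_d) : R :=
  (\sum_i `|Q i i|) / (\sum_i \sum_j `|Q i j|).

Definition pos_def (R : realFieldType) (d : nat) (Q : 'M[R]_d) : Prop :=
  Q^T = Q /\ forall v : 'cV[R]_d, v != 0 -> 0 < qform Q v.

(* Main.v *)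
Require Import Defs.
From HB Require Import structures.
From mathcomp Require Import all_boot all_order all_algebra ring lra.
Import Order.TTheory GRing.Theory Num.Theory.
Local Open Scope ring_scope.
Lemma qformCm (R : realFieldType) (d : nat) (Q : 'M[R]_d) (u z : 'cV[R]_d) :
  Q^T = Q -> z^T *m Q *m u = u^T *m Q *m z.
Proof.
move=> hQ; have -> : z^T *m Q *m u = (z^T *m Q *m u)^T.
  by apply/matrixP => i j; rewrite [RHS]mxE (ord1 i) (ord1 j).
by rewrite !trmx_mul trmxK hQ mulmxA.
Qed.

Lemma qform_add (R : realFieldType) (d : nat) (Q : 'M[R]_d) (u z : 'cV[R]_d) (a : R) :
  Q^T = Q -> qform Q (u + a *: z) =
   qform Q u + 2 * a * (u^T *m Q *m z) 0 0 + a ^+ 2 * qform Q z.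
Proof.
move=> hQ; rewrite /qform.
rewrite [(u + _)^T]linearD /= [(a *: z)^T]linearZ /= mulmxDl mulmxDl mulmxDr mulmxDr.
rewrite -!scalemxAl -!scalemxAr (@qformCm _ _ Q u z hQ).
set A := u^T *m Q *m u; set B := u^T *m Q *m z; set C := z^T *m Q *m z.
rewrite !mxE; ring.
Qed.

Lemma loss_diff (R : realFieldType) (d : nat) (Q : 'M[R]_d) xs nu (th z : 'cV[R]_d) (a : R) :
  Q^T = Q -> sqp_loss Q xs nu (th + a *: z) - sqp_loss Q xs nu th =
   a * ((sqp_grad Q xs th)^T *m z) 0 0 + 2^-1 * a ^+ 2 * qform Q z.
Proof.
move=> hQ; rewrite /sqp_loss /sqp_grad.
have -> : th + a *: z - xs = (th - xs) + a *: z by rewrite addrAC.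
rewrite qform_add // trmx_mul hQ.
have h2 : (2:R) != 0 by rewrite pnatr_eq0.
by field.
Qed.

Lemma coord_lemma (R : realFieldType) (d : nat) (P : {ffun 'I_d -> bool} -> R) (i : 'I_d) (x : R) :
  \sum_b P b = 1 ->
  x * \sum_b P b * (if b i then -1 else 1) =
  - ((2 * \sum_(b : {ffun 'I_d -> bool} | sign_of_pattern R b i == sgn x) P b - 1) * `|x|).
Proof.
move=> hP.
have hn1 : ((-1:R) == 1) = false by apply/negbTE/eqP => h; lra.
have h1n : ((1:R) == -1) = false by apply/negbTE/eqP => h; lra.
rewrite [X in x * X](bigID (fun b : {ffun 'I_d -> bool} => b i)) /=.
have -> : \sum_(b : {ffun 'I_d -> bool} | b i) P b * (if b i then -1 else 1) = - \sum_(b : {ffun 'I_d -> bool} | b i) P b.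
  by rewrite -sumrN; apply: eq_bigr => b ->; rewrite mulrN1.
have -> : \sum_(b : {ffun 'I_d -> bool} | ~~ b i) P b * (if b i then -1 else 1) = \sum_(b : {ffun 'I_d -> bool} | ~~ b i) P b.
  by apply: eq_bigr => b /negbTE ->; rewrite mulr1.
have hs' : \sum_(b : {ffun 'I_d -> bool} | ~~ b i) P b = 1 - \sum_(b : {ffun 'I_d -> bool} | b i) P b.
  rewrite -hP [in RHS](bigID (fun b : {ffun 'I_d -> bool} => b i)) /=; ring.
have hs : \sum_(b : {ffun 'I_d -> bool} | b i) P b + \sum_(b : {ffun 'I_d -> bool} | ~~ b i) P b = 1 by rewrite -hP [RHS](bigID (fun b : {ffun 'I_d -> bool} => b i)) /=.
rewrite /sgn /sign_of_pattern; have [hx|hx] := boolP (0 <= x); rewrite ?(negbTE hx) ?hx.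
  have -> : \sum_(b : {ffun 'I_d -> bool} | (if b i then (1:R) else -1) == 1) P b = \sum_(b : {ffun 'I_d -> bool} | b i) P b.
    by apply: eq_bigl => b; case: (b i); rewrite ?eqxx ?hn1.
  rewrite ger0_norm // hs'; ring.
have -> : \sum_(b : {ffun 'I_d -> bool} | (if b i then (1:R) else -1) == -1) P b = \sum_(b : {ffun 'I_d -> bool} | ~~ b i) P b.
  by apply: eq_bigl => b; case: (b i); rewrite ?eqxx ?h1n.
have hx' : x < 0 by rewrite ltNge.
rewrite ltr0_norm // hs'; ring.
Qed.

Lemma qform_sum (R : realFieldType) (d : nat) (Q : 'M[R]_d) (v : 'cV[R]_d) :
  qform Q v = \sum_i \sum_j v i 0 * Q i j * v j 0.
Proof.
rewrite /qform mxE exchange_big /=; apply: eq_bigr => j _.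
rewrite mxE mulr_suml; apply: eq_bigr => i _; by rewrite !mxE.
Qed.

Lemma qform_bound (R : realFieldType) (d : nat) (Q : 'M[R]_d) (v : 'cV[R]_d) :
  (forall i, `|v i 0| = 1) -> qform Q v <= \sum_i \sum_j `|Q i j|.
Proof.
move=> hv; rewrite qform_sum; apply: ler_sum => i _; apply: ler_sum => j _.
apply: le_trans (ler_norm _) _.
by rewrite !normrM !hv mul1r mulr1.
Qed.

Lemma qform_delta (R : realFieldType) (d : nat) (Q : 'M[R]_d) (i : 'I_d) :
  qform Q (delta_mx i 0) = Q i i.
Proof.
rewrite /qform trmx_delta -rowE -colE !mxE.
by [].
Qed.

Lemma G_sum (R : realFieldType) (d : nat) (g : 'cV[R]_d) (P : {ffun 'I_d -> bool} -> R) :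
  (g^T *m E_dir P) 0 0 = \sum_b P b * (g^T *m ssd_dir R b) 0 0.
Proof.
rewrite /E_dir mulmx_sumr summxE; apply: eq_bigr => b _.
by rewrite -scalemxAr mxE.
Qed.

Lemma G_coord (R : realFieldType) (d : nat) (g : 'cV[R]_d) (P : {ffun 'I_d -> bool} -> R) :
  (g^T *m E_dir P) 0 0 = \sum_i g i 0 * \sum_b P b * (if b i then -1 else 1).
Proof.
rewrite mxE; apply: eq_bigr => i _.
rewrite /E_dir !mxE summxE; congr (_ * _); apply: eq_bigr => b _.
by rewrite !mxE.
Qed.

Lemma Eloss_diff (R : realFieldType) (d : nat) (Q : 'M[R]_d) xs nu (th : 'cV[R]_d)
   (P : {ffun 'I_d -> bool} -> R) (a : R) :
  Q^T = Q -> \sum_b P b = 1 ->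
  E_loss Q xs nu th P a - sqp_loss Q xs nu th =
   a * ((sqp_grad Q xs th)^T *m E_dir P) 0 0 + 2^-1 * a ^+ 2 * E_qform Q P.
Proof.
move=> hQ hP; rewrite /E_loss.
have -> : sqp_loss Q xs nu th = \sum_b P b * sqp_loss Q xs nu th.
  by rewrite -mulr_suml hP mul1r.
rewrite -sumrB G_sum /E_qform mulr_sumr mulr_sumr -big_split /=.
apply: eq_bigr => b _; rewrite -mulrBr loss_diff //; ring.
Qed.
Lemma trace_lam (R : realFieldType) (d : nat) (Q : 'M[R]_d) (lam : 'I_d -> R) :
  char_poly Q = \prod_(i < d) ('X - (lam i)%:P) -> \tr Q = \sum_i lam i.
Proof.
move=> hc; case: d Q lam hc => [|d] Q lam hc.
  by rewrite /mxtrace !big_ord0.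
have := char_poly_trace Q (isT : (0 < d.+1)%N).
rewrite hc.
have -> : \prod_(i < d.+1) ('X - (lam i)%:P) =
   \prod_(p <- map lam (enum 'I_d.+1)) ('X - p%:P).
  by rewrite big_map big_enum.
have hs : size (map lam (enum 'I_d.+1)) = d.+1 by rewrite size_map size_enum_ord.
have := @coefPn_prod_XsubC _ (map lam (enum 'I_d.+1)).
rewrite hs => -> //.
rewrite big_map big_enum /= => /eqP; rewrite eqr_opp => /eqP ->. by [].
Qed.

Lemma pos_add (R : realFieldType) (x y : R) : 0 < x -> 0 <= y -> 0 < x + y.
Proof. move=> *; lra. Qed.

Lemma lt_le_trans' (R : realFieldType) (x y z : R) : x < y -> y <= z -> x < z.
Proof. move=> *; lra. Qed.

Theorem mainTheorem6 (R : realFieldType) (d : nat) (Q : 'M[R]_d) (lam : 'I_d -> R)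
  (xstar : 'cV[R]_d) (nu : R) (theta : 'cV[R]_d) (P : {ffun 'I_d -> bool} -> R) :
  pos_def Q ->
  char_poly Q = \prod_(i < d) ('X - (lam i)%:P) ->
  (forall i, 0 < lam i) ->
  0 <= nu ->
  (forall b, 0 <= P b) ->
  \sum_b P b = 1 ->
  improvement Q xstar nu theta P >=
    2^-1 * (\sum_i (2 * rho Q xstar theta P i - 1) * `|sqp_grad Q xstar theta i 0|) ^+ 2
      / (\sum_i lam i) * p_diag Q.
Proof.
move=> [hQ hpd] hc hlam hnu hP0 hP1.
have [d0|dpos] := posnP d.
  subst d; rewrite !big_ord0 expr0n /= mulr0 !mul0r; exact: normr_ge0.
set g := sqp_grad Q xstar theta.
set N := \sum_i (2 * rho Q xstar theta P i - 1) * `|g i 0|.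
have hG : (g^T *m E_dir P) 0 0 = - N.
  rewrite G_coord /N -sumrN; apply: eq_bigr => i _; rewrite coord_lemma //.
pose i0 : 'I_d := Ordinal dpos.
have hq : forall b, 0 < qform Q (ssd_dir R b).
  move=> b; apply: hpd; apply/eqP => h.
  have := congr1 (fun M : 'cV[R]_d => M i0 0) h; rewrite !mxE.
  by case: (b i0) => /eqP; rewrite ?oppr_eq0 oner_eq0.
set S := E_qform Q P.
have hSpos : 0 < S.
  have [b hb] : exists b, 0 < P b.
    case: (pickP (fun b => 0 < P b)) => [b hb|hn]; first by exists b.
    exfalso; have : \sum_b P b = 0.
      apply: big1 => b _; apply/le_anti; rewrite hP0 andbT.
      by rewrite leNgt hn.
    by rewrite hP1 => /eqP; rewrite oner_eq0.
  rewrite /S /E_qform (bigD1 b) //=.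
  have h1 : 0 < P b * qform Q (ssd_dir R b) by rewrite mulr_gt0.
  have h2 : 0 <= \sum_(c | c != b) P c * qform Q (ssd_dir R c).
    by apply: sumr_ge0 => c _; rewrite mulr_ge0 // ltW.
  exact: pos_add.
set A := \sum_i \sum_j `|Q i j|.
have hSA : S <= A.
  rewrite /S /E_qform -[A]mul1r -hP1 mulr_suml; apply: ler_sum => b _.
  apply: ler_wpM2l => //; apply: qform_bound => i; rewrite !mxE.
  by case: (b i); rewrite ?normrN normr1.
have hQii : forall i, 0 < Q i i.
  move=> i; rewrite -qform_delta; apply: hpd; apply/eqP => h.
  have := congr1 (fun M : 'cV[R]_d => M i 0) h; rewrite !mxE !eqxx /=.
  by move/eqP; rewrite oner_eq0.
have hT : \sum_i lam i = \sum_i `|Q i i|.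
  rewrite -(@trace_lam _ _ Q lam hc) /mxtrace; apply: eq_bigr => i _.
  by rewrite ger0_norm // ltW.
have hTpos : 0 < \sum_i `|Q i i|.
  rewrite (bigD1 i0) //=.
  have h1 : 0 < `|Q i0 i0| by rewrite ger0_norm ?hQii // ltW.
  have h2 : 0 <= \sum_(i | i != i0) `|Q i i| by apply: sumr_ge0.
  exact: pos_add.
have hApos : 0 < A by exact: lt_le_trans' hSpos hSA.
rewrite /improvement Eloss_diff // /opt_step -/g hG -/S.
have hS0 : S != 0 by rewrite gt_eqF.
have -> : - - N / S * - N + 2^-1 * (- - N / S) ^+ 2 * S = - (2^-1 * N ^+ 2 / S).
  by field.
rewrite normrN ger0_norm; last by rewrite divr_ge0 ?(ltW hSpos) // mulr_ge0 ?sqr_ge0 // invr_ge0 ler0n.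
rewrite /p_diag -hT.
have hT0 : \sum_i lam i != 0 by rewrite hT gt_eqF.
have hA0 : A != 0 by rewrite gt_eqF.
rewrite -/A. have h2 : (2:R) != 0 by rewrite pnatr_eq0.
have -> : 2^-1 * N ^+ 2 / (\sum_i lam i) * ((\sum_i lam i) / A) = 2^-1 * N ^+ 2 / A.
  by field; rewrite hA0 hT0.
apply: (@ler_wpM2l _ (2^-1 * N ^+ 2)); first by rewrite mulr_ge0 ?sqr_ge0 // invr_ge0 ler0n.
by rewrite lef_pV2 ?posrE.
Qed.
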